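(* Let $A$ be a partially symmetric associative 0-dialgebra with involution. On $A\oplus A$ define $(a,b)\dashv(c,d)=(a\dashv c-d\vdash b^\ast,\; a^\ast\dashv d+c\vdash b)$, $(a,b)\vdash(c,d)=(a\vdash c-d\dashv b^\ast,\; a^\ast\vdash d+c\dashv b)$ and $(a,b)^\ast=(a^\ast,-b)$. Then $A\oplus A$ with these operations is a partially symmetric alternative 0-dialgebra with involution.
   Context: A 0-dialgebra with involution is a vector space with bilinear operations $\dashv,\vdash$ satisfying $a\dashv(b\dashv c)=a\dashv(b\vdash c)$ and $(a\dashv b)\vdash c=(a\vdash b)\vdash c$, together with a linear map $\ast$ with $(a^\ast)^\ast=a$, $(a\dashv b)^\ast=b^\ast\vdash a^\ast$, $(a\vdash b)^\ast=b^\ast\dashv a^\ast$. Write $\mathrm{sym}(x)=x+x^\ast$ and $\{x,y\}=x\dashv y-y\vdash x$; it is partially symmetric if $\{\mathrm{sym}(x),y\}=0$ and $\{x,\mathrm{sym}(y)\}=0$ for all $x,y$. Associators: $(a,b,c)_\dashv=(a\dashv b)\dashv c-a\dashv(b\dashv c)$, $(a,b,c)_\times=(a\vdash b)\dashv c-a\vdash(b\dashv c)$, $(a,b,c)_\vdash=(a\vdash b)\vdash c-a\vdash(b\vdash c)$. The 0-dialgebra is associative if all three associators vanish identically, and alternative if $(a,b,c)_\dashv+(c,b,a)_\vdash=0$, $(a,b,c)_\dashv-(b,c,a)_\vdash=0$ and $(a,b,c)_\times+(a,c,b)_\vdash=0$ for all $a,b,c$. *)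

(* Defs.v *)
From HB Require Import structures.
From mathcomp Require Import all_boot all_algebra.
Set Implicit Arguments. Unset Strict Implicit. Unset Printing Implicit Defensive.
Import GRing.Theory.
Local Open Scope ring_scope.

(* A vector space V over a field F, with two bilinear products
   lp ("a -| b") and rp ("a |- b") and a map s ("a^*"). *)
Section Dialg.
Variables (F : fieldType) (V : lmodType F).
Variables (lp rp : V -> V -> V) (s : V -> V).

Definition bilinear_op (op : V -> V -> V) : Prop :=
  (forall (k : F) (a b c : V), op (k *: a + b) c = k *: op a c + op b c) /\
  (forall (k : F) (a b c : V), op a (k *: b + c) = k *: op a b + op a c).

Definition is_0dialg_inv : Prop :=
  [/\ bilinear_op lp, bilinear_op rp,
      (forall a b c, lp a (lp b c) = lp a (rp b c)),
      (forall a b c, rp (lp a b) c = rp (rp a b) c) &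
      [/\ (forall (k : F) (a b : V), s (k *: a + b) = k *: s a + s b),
          (forall a, s (s a) = a),
          (forall a b, s (lp a b) = rp (s b) (s a)) &
          (forall a b, s (rp a b) = lp (s b) (s a))]].

Definition symv (x : V) : V := x + s x.
Definition dbrack (x y : V) : V := lp x y - rp y x.

Definition partially_symmetric : Prop :=
  (forall x y, dbrack (symv x) y = 0) /\ (forall x y, dbrack x (symv y) = 0).

Definition assoc_l (a b c : V) : V := lp (lp a b) c - lp a (lp b c).
Definition assoc_x (a b c : V) : V := lp (rp a b) c - rp a (lp b c).
Definition assoc_r (a b c : V) : V := rp (rp a b) c - rp a (rp b c).

Definition associative_0dialg : Prop :=
  forall a b c, [/\ assoc_l a b c = 0, assoc_x a b c = 0 & assoc_r a b c = 0].

Definition alternative_0dialg : Prop :=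
  forall a b c, [/\ assoc_l a b c + assoc_r c b a = 0,
                    assoc_l a b c - assoc_r b c a = 0 &
                    assoc_x a b c + assoc_r a c b = 0].
End Dialg.

Section Double.
Variables (F : fieldType) (V : lmodType F).
Variables (lp rp : V -> V -> V) (s : V -> V).

Definition dbl_lp (x y : V * V) : V * V :=
  (lp x.1 y.1 - rp y.2 (s x.2), lp (s x.1) y.2 + rp y.1 x.2).
Definition dbl_rp (x y : V * V) : V * V :=
  (rp x.1 y.1 - lp y.2 (s x.2), rp (s x.1) y.2 + lp y.1 x.2).
Definition dbl_s (x : V * V) : V * V := (s x.1, - x.2).
End Double.

(* Main.v *)
From HB Require Import structures.
Require Import Defs.
From mathcomp Require Import all_boot all_algebra ring.
Set Implicit Arguments. Unset Strict Implicit. Unset Printing Implicit Defensive.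
Import GRing.Theory.
Local Open Scope ring_scope.

Section SZ.
Variables (F : fieldType) (V : lmodType F).
Definition SZ : Type := (F * V)%type.
HB.instance Definition _ := GRing.Zmodule.on SZ.
Definition szmul (x y : SZ) : SZ := (x.1 * y.1, y.1 *: x.2 + x.1 *: y.2).
Definition szone : SZ := (1, 0).
Lemma szmulA : associative szmul.
Proof. move=> [a u] [b v] [c w]; rewrite /szmul /=; congr pair; first by rewrite mulrA.
by rewrite !scalerDr !scalerA addrA [c * b]mulrC [c * a]mulrC. Qed.
Lemma szmulC : commutative szmul.
Proof. move=> [a u] [b v]; rewrite /szmul /= mulrC addrC //. Qed.
Lemma szmul1 : left_id szone szmul.
Proof. move=> [a u]; rewrite /szmul /szone /= mul1r scale1r scaler0 add0r //. Qed.
Lemma szmulD : left_distributive szmul +%R.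
Proof. move=> [a u] [b v] [c w]; rewrite /szmul /=; congr pair; first by rewrite mulrDl.
by rewrite scalerDr scalerDl addrACA. Qed.
Lemma szone_neq0 : szone != 0.
Proof. by apply/negP=> /eqP [] /eqP; rewrite oner_eq0. Qed.
HB.instance Definition _ := GRing.Zmodule_isComNzRing.Build SZ szmulA szmulC szmul1 szmulD szone_neq0.
Definition iota (x : V) : SZ := (0, x).
Lemma iotaD x y : iota (x + y) = iota x + iota y.
Proof. rewrite /iota; congr pair; simpl; rewrite ?addr0 //. Qed.
Lemma iotaN x : iota (- x) = - iota x.
Proof. rewrite /iota; congr pair; simpl; rewrite ?oppr0 //. Qed.
Lemma iota0 : iota 0 = 0. Proof. by []. Qed.
Lemma iotaZ (k : F) x : iota (k *: x) = ((k, 0) : SZ) * iota x.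
Proof. rewrite /iota /GRing.mul /= /szmul /=; congr pair; rewrite ?mulr0 ?scaler0 ?add0r //. Qed.
Lemma iota_inj x y : iota x = iota y -> x = y.
Proof. by case. Qed.
End SZ.


Ltac zmod := apply: iota_inj; rewrite ?(iotaD, iotaN, iota0, iotaZ); ring.

Section Pairs.
Variables (F : fieldType) (V : lmodType F).
Lemma fstD (p q : V * V) : (p + q).1 = p.1 + q.1. Proof. by []. Qed.
Lemma sndD (p q : V * V) : (p + q).2 = p.2 + q.2. Proof. by []. Qed.
Lemma fstN (p : V * V) : (- p).1 = - p.1. Proof. by []. Qed.
Lemma sndN (p : V * V) : (- p).2 = - p.2. Proof. by []. Qed.
Lemma fstZ (k : F) (p : V * V) : (k *: p).1 = k *: p.1. Proof. by []. Qed.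
Lemma sndZ (k : F) (p : V * V) : (k *: p).2 = k *: p.2. Proof. by []. Qed.
Lemma pext (p q : V * V) : p.1 = q.1 -> p.2 = q.2 -> p = q.
Proof. by case: p q => [? ?] [? ?] /= -> ->. Qed.
Lemma pext0 (p : V * V) : p.1 = 0 -> p.2 = 0 -> p = 0.
Proof. by case: p => ? ? /= -> ->. Qed.
End Pairs.

Ltac simp := rewrite /= ?(fstD, sndD, fstN, sndN, fstZ, sndZ) /=.

Ltac subh h := lazymatch type of h with ?X = 0 => lazymatch goal with |- ?G = 0 =>
  apply: (@eq_trans _ _ (G - X)); [by rewrite h subr0 | ] end end.
Ltac addh h := lazymatch type of h with ?X = 0 => lazymatch goal with |- ?G = 0 =>
  apply: (@eq_trans _ _ (G + X)); [by rewrite h addr0 | ] end end.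

Theorem theorem5p9 (F : fieldType) (V : lmodType F)
    (lp rp : V -> V -> V) (s : V -> V) :
  is_0dialg_inv lp rp s ->
  partially_symmetric lp rp s ->
  associative_0dialg lp rp ->
  [/\ is_0dialg_inv (V := (V * V)%type) (dbl_lp lp rp s) (dbl_rp lp rp s) (dbl_s s),
      partially_symmetric (dbl_lp lp rp s) (dbl_rp lp rp s) (dbl_s s) &
      alternative_0dialg (dbl_lp lp rp s) (dbl_rp lp rp s)].
Proof.
move=> [[lpZl lpZr] [rpZl rpZr] d1 d2 [sZ ss slp srp]] [PS1 PS2] HA.
have lpDl a b c : lp (a + b) c = lp a c + lp b c by have := lpZl 1 a b c; rewrite !scale1r.
have lpDr a b c : lp a (b + c) = lp a b + lp a c by have := lpZr 1 a b c; rewrite !scale1r.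
have rpDl a b c : rp (a + b) c = rp a c + rp b c by have := rpZl 1 a b c; rewrite !scale1r.
have rpDr a b c : rp a (b + c) = rp a b + rp a c by have := rpZr 1 a b c; rewrite !scale1r.
have sD a b : s (a + b) = s a + s b by have := sZ 1 a b; rewrite !scale1r.
have x0 (x : V) : x = x + x -> x = 0.
  by move=> h; apply: (@addrI _ x); rewrite addr0 -h.
have lp0l c : lp 0 c = 0 by apply: x0; rewrite -lpDl addr0.
have lp0r c : lp c 0 = 0 by apply: x0; rewrite -lpDr addr0.
have rp0l c : rp 0 c = 0 by apply: x0; rewrite -rpDl addr0.
have rp0r c : rp c 0 = 0 by apply: x0; rewrite -rpDr addr0.
have s0 : s 0 = 0 by apply: x0; rewrite -sD addr0.
have lpZl' k a c : lp (k *: a) c = k *: lp a c by have := lpZl k a 0 c; rewrite !addr0 lp0l addr0.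
have lpZr' k a c : lp c (k *: a) = k *: lp c a by have := lpZr k c a 0; rewrite !addr0 lp0r addr0.
have rpZl' k a c : rp (k *: a) c = k *: rp a c by have := rpZl k a 0 c; rewrite !addr0 rp0l addr0.
have rpZr' k a c : rp c (k *: a) = k *: rp c a by have := rpZr k c a 0; rewrite !addr0 rp0r addr0.
have sZ' k a : s (k *: a) = k *: s a by have := sZ k a 0; rewrite !addr0 s0 addr0.
have lpNl a c : lp (- a) c = - lp a c by rewrite -scaleN1r lpZl' scaleN1r.
have lpNr a c : lp c (- a) = - lp c a by rewrite -scaleN1r lpZr' scaleN1r.
have rpNl a c : rp (- a) c = - rp a c by rewrite -scaleN1r rpZl' scaleN1r.
have rpNr a c : rp c (- a) = - rp c a by rewrite -scaleN1r rpZr' scaleN1r.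
have sN a : s (- a) = - s a by rewrite -scaleN1r sZ' scaleN1r.
have n1 x y z : lp (lp x y) z = lp x (lp y z).
  by case: (HA x y z) => /eqP; rewrite /assoc_l subr_eq0 => /eqP.
have n2 x y z : lp x (rp y z) = lp x (lp y z) by rewrite d1.
have n3 x y z : lp (rp x y) z = rp x (lp y z).
  by case: (HA x y z) => _ /eqP; rewrite /assoc_x subr_eq0 => /eqP.
have n4 x y z : rp (rp x y) z = rp x (rp y z).
  by case: (HA x y z) => _ _ /eqP; rewrite /assoc_r subr_eq0 => /eqP.
have n5 x y z : rp (lp x y) z = rp x (rp y z) by rewrite d2 n4.
split.
- split.
  + split=> k [a b] [c d] [e f]; apply: pext; rewrite /dbl_lp; simp; rewrite ?(lpDl, lpDr, lpNl, lpNr, rpDl, rpDr, rpNl, rpNr, lpZl', lpZr', rpZl', rpZr', sD, sN, sZ', ss, slp, srp, lp0l, lp0r, rp0l, rp0r, s0, n1, n2, n3, n4, n5); zmod.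
  + split=> k [a b] [c d] [e f]; apply: pext; rewrite /dbl_rp; simp; rewrite ?(lpDl, lpDr, lpNl, lpNr, rpDl, rpDr, rpNl, rpNr, lpZl', lpZr', rpZl', rpZr', sD, sN, sZ', ss, slp, srp, lp0l, lp0r, rp0l, rp0r, s0, n1, n2, n3, n4, n5); zmod.
  + move=> [a b] [c d] [e f]; apply: pext; rewrite /dbl_lp /dbl_rp; simp; rewrite ?(lpDl, lpDr, lpNl, lpNr, rpDl, rpDr, rpNl, rpNr, lpZl', lpZr', rpZl', rpZr', sD, sN, sZ', ss, slp, srp, lp0l, lp0r, rp0l, rp0r, s0, n1, n2, n3, n4, n5); zmod.
  + move=> [a b] [c d] [e f]; apply: pext; rewrite /dbl_lp /dbl_rp; simp; rewrite ?(lpDl, lpDr, lpNl, lpNr, rpDl, rpDr, rpNl, rpNr, lpZl', lpZr', rpZl', rpZr', sD, sN, sZ', ss, slp, srp, lp0l, lp0r, rp0l, rp0r, s0, n1, n2, n3, n4, n5); zmod.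
  + split.
    * move=> k [a b] [c d]; apply: pext; rewrite /dbl_s; simp; rewrite ?(lpDl, lpDr, lpNl, lpNr, rpDl, rpDr, rpNl, rpNr, lpZl', lpZr', rpZl', rpZr', sD, sN, sZ', ss, slp, srp, lp0l, lp0r, rp0l, rp0r, s0, n1, n2, n3, n4, n5); zmod.
    * move=> [a b]; apply: pext; rewrite /dbl_s; simp; rewrite ?(lpDl, lpDr, lpNl, lpNr, rpDl, rpDr, rpNl, rpNr, lpZl', lpZr', rpZl', rpZr', sD, sN, sZ', ss, slp, srp, lp0l, lp0r, rp0l, rp0r, s0, n1, n2, n3, n4, n5); zmod.
    * move=> [a b] [c d]; apply: pext; rewrite /dbl_s /dbl_lp /dbl_rp; simp; rewrite ?(lpDl, lpDr, lpNl, lpNr, rpDl, rpDr, rpNl, rpNr, lpZl', lpZr', rpZl', rpZr', sD, sN, sZ', ss, slp, srp, lp0l, lp0r, rp0l, rp0r, s0, n1, n2, n3, n4, n5); zmod.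
    * move=> [a b] [c d]; apply: pext; rewrite /dbl_s /dbl_lp /dbl_rp; simp; rewrite ?(lpDl, lpDr, lpNl, lpNr, rpDl, rpDr, rpNl, rpNr, lpZl', lpZr', rpZl', rpZr', sD, sN, sZ', ss, slp, srp, lp0l, lp0r, rp0l, rp0r, s0, n1, n2, n3, n4, n5); zmod.
- split.
  + move=> [a b] [c d]; apply: pext0; rewrite /dbrack /symv /dbl_s /dbl_lp /dbl_rp; simp; rewrite ?(lpDl, lpDr, lpNl, lpNr, rpDl, rpDr, rpNl, rpNr, lpZl', lpZr', rpZl', rpZr', sD, sN, sZ', ss, slp, srp, lp0l, lp0r, rp0l, rp0r, s0, n1, n2, n3, n4, n5).
    * have h := PS1 a c; rewrite /dbrack /symv /= in h; rewrite ?(lpDl, lpDr, lpNl, lpNr, rpDl, rpDr, rpNl, rpNr, sD, sN, ss, slp, srp, lp0l, lp0r, rp0l, rp0r, s0, n1, n2, n3, n4, n5) in h; subh h; clear h; zmod.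
    * zmod.
  + move=> [a b] [c d]; apply: pext0; rewrite /dbrack /symv /dbl_s /dbl_lp /dbl_rp; simp; rewrite ?(lpDl, lpDr, lpNl, lpNr, rpDl, rpDr, rpNl, rpNr, lpZl', lpZr', rpZl', rpZr', sD, sN, sZ', ss, slp, srp, lp0l, lp0r, rp0l, rp0r, s0, n1, n2, n3, n4, n5).
    * have h := PS2 a c; rewrite /dbrack /symv /= in h; rewrite ?(lpDl, lpDr, lpNl, lpNr, rpDl, rpDr, rpNl, rpNr, sD, sN, ss, slp, srp, lp0l, lp0r, rp0l, rp0r, s0, n1, n2, n3, n4, n5) in h; subh h; clear h; zmod.
    * zmod.
- move=> [a b] [c d] [e f]; split; apply: pext0;
    rewrite /assoc_l /assoc_r /assoc_x /dbl_lp /dbl_rp; simp; rewrite ?(lpDl, lpDr, lpNl, lpNr, rpDl, rpDr, rpNl, rpNr, lpZl', lpZr', rpZl', rpZr', sD, sN, sZ', ss, slp, srp, lp0l, lp0r, rp0l, rp0r, s0, n1, n2, n3, n4, n5).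
  + have h := (PS1 (lp b (s d)) e); rewrite /dbrack /symv /= in h; rewrite ?(lpDl, lpDr, lpNl, lpNr, rpDl, rpDr, rpNl, rpNr, sD, sN, ss, slp, srp, lp0l, lp0r, rp0l, rp0r, s0, n1, n2, n3, n4, n5) in h; addh h; clear h.
    have h := (PS2 a (lp d (s f))); rewrite /dbrack /symv /= in h; rewrite ?(lpDl, lpDr, lpNl, lpNr, rpDl, rpDr, rpNl, rpNr, sD, sN, ss, slp, srp, lp0l, lp0r, rp0l, rp0r, s0, n1, n2, n3, n4, n5) in h; subh h; clear h.
    have h := (PS1 (lp b (s f)) (s c)); rewrite /dbrack /symv /= in h; rewrite ?(lpDl, lpDr, lpNl, lpNr, rpDl, rpDr, rpNl, rpNr, sD, sN, ss, slp, srp, lp0l, lp0r, rp0l, rp0r, s0, n1, n2, n3, n4, n5) in h; addh h; clear h.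
    zmod.
  + have h := (congr1 (fun t => lp t f) (PS2 a c)); rewrite /dbrack /symv /= in h; rewrite ?(lpDl, lpDr, lpNl, lpNr, rpDl, rpDr, rpNl, rpNr, sD, sN, ss, slp, srp, lp0l, lp0r, rp0l, rp0r, s0, n1, n2, n3, n4, n5) in h; subh h; clear h.
    have h := (congr1 (fun t => lp t f) (PS1 a (s c))); rewrite /dbrack /symv /= in h; rewrite ?(lpDl, lpDr, lpNl, lpNr, rpDl, rpDr, rpNl, rpNr, sD, sN, ss, slp, srp, lp0l, lp0r, rp0l, rp0r, s0, n1, n2, n3, n4, n5) in h; addh h; clear h.
    have h := (congr1 (fun t => lp t d) (PS2 a e)); rewrite /dbrack /symv /= in h; rewrite ?(lpDl, lpDr, lpNl, lpNr, rpDl, rpDr, rpNl, rpNr, sD, sN, ss, slp, srp, lp0l, lp0r, rp0l, rp0r, s0, n1, n2, n3, n4, n5) in h; subh h; clear h.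
    have h := (congr1 (fun t => lp t d) (PS1 a e)); rewrite /dbrack /symv /= in h; rewrite ?(lpDl, lpDr, lpNl, lpNr, rpDl, rpDr, rpNl, rpNr, sD, sN, ss, slp, srp, lp0l, lp0r, rp0l, rp0r, s0, n1, n2, n3, n4, n5) in h; addh h; clear h.
    have h := (congr1 (fun t => rp t b) (PS2 c e)); rewrite /dbrack /symv /= in h; rewrite ?(lpDl, lpDr, lpNl, lpNr, rpDl, rpDr, rpNl, rpNr, sD, sN, ss, slp, srp, lp0l, lp0r, rp0l, rp0r, s0, n1, n2, n3, n4, n5) in h; addh h; clear h.
    have h := (congr1 (fun t => rp t b) (PS1 c (s e))); rewrite /dbrack /symv /= in h; rewrite ?(lpDl, lpDr, lpNl, lpNr, rpDl, rpDr, rpNl, rpNr, sD, sN, ss, slp, srp, lp0l, lp0r, rp0l, rp0r, s0, n1, n2, n3, n4, n5) in h; subh h; clear h.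
    zmod.
  + have h := (PS2 (lp b (s d)) e); rewrite /dbrack /symv /= in h; rewrite ?(lpDl, lpDr, lpNl, lpNr, rpDl, rpDr, rpNl, rpNr, sD, sN, ss, slp, srp, lp0l, lp0r, rp0l, rp0r, s0, n1, n2, n3, n4, n5) in h; subh h; clear h.
    have h := (PS1 (lp b (s d)) e); rewrite /dbrack /symv /= in h; rewrite ?(lpDl, lpDr, lpNl, lpNr, rpDl, rpDr, rpNl, rpNr, sD, sN, ss, slp, srp, lp0l, lp0r, rp0l, rp0r, s0, n1, n2, n3, n4, n5) in h; addh h; clear h.
    have h := (PS2 (lp b (s f)) c); rewrite /dbrack /symv /= in h; rewrite ?(lpDl, lpDr, lpNl, lpNr, rpDl, rpDr, rpNl, rpNr, sD, sN, ss, slp, srp, lp0l, lp0r, rp0l, rp0r, s0, n1, n2, n3, n4, n5) in h; subh h; clear h.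
    have h := (PS1 (lp b (s f)) (s c)); rewrite /dbrack /symv /= in h; rewrite ?(lpDl, lpDr, lpNl, lpNr, rpDl, rpDr, rpNl, rpNr, sD, sN, ss, slp, srp, lp0l, lp0r, rp0l, rp0r, s0, n1, n2, n3, n4, n5) in h; addh h; clear h.
    zmod.
  + have h := (congr1 (fun t => lp t f) (PS1 a (s c))); rewrite /dbrack /symv /= in h; rewrite ?(lpDl, lpDr, lpNl, lpNr, rpDl, rpDr, rpNl, rpNr, sD, sN, ss, slp, srp, lp0l, lp0r, rp0l, rp0r, s0, n1, n2, n3, n4, n5) in h; addh h; clear h.
    have h := (congr1 (rp f) (PS2 b d)); rewrite /dbrack /symv /= in h; rewrite ?(lpDl, lpDr, lpNl, lpNr, rpDl, rpDr, rpNl, rpNr, sD, sN, ss, slp, srp, lp0l, lp0r, rp0l, rp0r, s0, n1, n2, n3, n4, n5) in h; addh h; clear h.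
    have h := (PS1 (lp b (s d)) f); rewrite /dbrack /symv /= in h; rewrite ?(lpDl, lpDr, lpNl, lpNr, rpDl, rpDr, rpNl, rpNr, sD, sN, ss, slp, srp, lp0l, lp0r, rp0l, rp0r, s0, n1, n2, n3, n4, n5) in h; addh h; clear h.
    have h := (congr1 (rp f) (PS1 b d)); rewrite /dbrack /symv /= in h; rewrite ?(lpDl, lpDr, lpNl, lpNr, rpDl, rpDr, rpNl, rpNr, sD, sN, ss, slp, srp, lp0l, lp0r, rp0l, rp0r, s0, n1, n2, n3, n4, n5) in h; subh h; clear h.
    have h := (PS1 (lp b (s f)) d); rewrite /dbrack /symv /= in h; rewrite ?(lpDl, lpDr, lpNl, lpNr, rpDl, rpDr, rpNl, rpNr, sD, sN, ss, slp, srp, lp0l, lp0r, rp0l, rp0r, s0, n1, n2, n3, n4, n5) in h; addh h; clear h.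
    have h := (congr1 (rp d) (PS2 b f)); rewrite /dbrack /symv /= in h; rewrite ?(lpDl, lpDr, lpNl, lpNr, rpDl, rpDr, rpNl, rpNr, sD, sN, ss, slp, srp, lp0l, lp0r, rp0l, rp0r, s0, n1, n2, n3, n4, n5) in h; addh h; clear h.
    have h := (congr1 (rp d) (PS1 b f)); rewrite /dbrack /symv /= in h; rewrite ?(lpDl, lpDr, lpNl, lpNr, rpDl, rpDr, rpNl, rpNr, sD, sN, ss, slp, srp, lp0l, lp0r, rp0l, rp0r, s0, n1, n2, n3, n4, n5) in h; subh h; clear h.
    have h := (congr1 (fun t => lp t d) (PS1 a e)); rewrite /dbrack /symv /= in h; rewrite ?(lpDl, lpDr, lpNl, lpNr, rpDl, rpDr, rpNl, rpNr, sD, sN, ss, slp, srp, lp0l, lp0r, rp0l, rp0r, s0, n1, n2, n3, n4, n5) in h; addh h; clear h.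
    have h := (congr1 (fun t => rp t b) (PS2 c e)); rewrite /dbrack /symv /= in h; rewrite ?(lpDl, lpDr, lpNl, lpNr, rpDl, rpDr, rpNl, rpNr, sD, sN, ss, slp, srp, lp0l, lp0r, rp0l, rp0r, s0, n1, n2, n3, n4, n5) in h; addh h; clear h.
    have h := (congr1 (fun t => rp t b) (PS1 c (s e))); rewrite /dbrack /symv /= in h; rewrite ?(lpDl, lpDr, lpNl, lpNr, rpDl, rpDr, rpNl, rpNr, sD, sN, ss, slp, srp, lp0l, lp0r, rp0l, rp0r, s0, n1, n2, n3, n4, n5) in h; subh h; clear h.
    zmod.
  + have h := (PS2 (lp d (s b)) e); rewrite /dbrack /symv /= in h; rewrite ?(lpDl, lpDr, lpNl, lpNr, rpDl, rpDr, rpNl, rpNr, sD, sN, ss, slp, srp, lp0l, lp0r, rp0l, rp0r, s0, n1, n2, n3, n4, n5) in h; addh h; clear h.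
    have h := (PS1 (lp d (s f)) a); rewrite /dbrack /symv /= in h; rewrite ?(lpDl, lpDr, lpNl, lpNr, rpDl, rpDr, rpNl, rpNr, sD, sN, ss, slp, srp, lp0l, lp0r, rp0l, rp0r, s0, n1, n2, n3, n4, n5) in h; addh h; clear h.
    have h := (PS1 c (lp f (s b))); rewrite /dbrack /symv /= in h; rewrite ?(lpDl, lpDr, lpNl, lpNr, rpDl, rpDr, rpNl, rpNr, sD, sN, ss, slp, srp, lp0l, lp0r, rp0l, rp0r, s0, n1, n2, n3, n4, n5) in h; subh h; clear h.
    zmod.
  + have h := (congr1 (fun t => lp t f) (PS1 c (s a))); rewrite /dbrack /symv /= in h; rewrite ?(lpDl, lpDr, lpNl, lpNr, rpDl, rpDr, rpNl, rpNr, sD, sN, ss, slp, srp, lp0l, lp0r, rp0l, rp0r, s0, n1, n2, n3, n4, n5) in h; subh h; clear h.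
    have h := (PS2 d (lp b (s f))); rewrite /dbrack /symv /= in h; rewrite ?(lpDl, lpDr, lpNl, lpNr, rpDl, rpDr, rpNl, rpNr, sD, sN, ss, slp, srp, lp0l, lp0r, rp0l, rp0r, s0, n1, n2, n3, n4, n5) in h; subh h; clear h.
    have h := (congr1 (rp f) (PS1 d b)); rewrite /dbrack /symv /= in h; rewrite ?(lpDl, lpDr, lpNl, lpNr, rpDl, rpDr, rpNl, rpNr, sD, sN, ss, slp, srp, lp0l, lp0r, rp0l, rp0r, s0, n1, n2, n3, n4, n5) in h; subh h; clear h.
    have h := (congr1 (rp f) (PS2 d b)); rewrite /dbrack /symv /= in h; rewrite ?(lpDl, lpDr, lpNl, lpNr, rpDl, rpDr, rpNl, rpNr, sD, sN, ss, slp, srp, lp0l, lp0r, rp0l, rp0r, s0, n1, n2, n3, n4, n5) in h; addh h; clear h.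
    have h := (PS1 (rp b (s d)) f); rewrite /dbrack /symv /= in h; rewrite ?(lpDl, lpDr, lpNl, lpNr, rpDl, rpDr, rpNl, rpNr, sD, sN, ss, slp, srp, lp0l, lp0r, rp0l, rp0r, s0, n1, n2, n3, n4, n5) in h; addh h; clear h.
    have h := (congr1 (lp d) (PS2 b f)); rewrite /dbrack /symv /= in h; rewrite ?(lpDl, lpDr, lpNl, lpNr, rpDl, rpDr, rpNl, rpNr, sD, sN, ss, slp, srp, lp0l, lp0r, rp0l, rp0r, s0, n1, n2, n3, n4, n5) in h; addh h; clear h.
    have h := (congr1 (lp d) (PS1 b f)); rewrite /dbrack /symv /= in h; rewrite ?(lpDl, lpDr, lpNl, lpNr, rpDl, rpDr, rpNl, rpNr, sD, sN, ss, slp, srp, lp0l, lp0r, rp0l, rp0r, s0, n1, n2, n3, n4, n5) in h; subh h; clear h.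
    have h := (congr1 (fun t => rp t d) (PS2 (s a) e)); rewrite /dbrack /symv /= in h; rewrite ?(lpDl, lpDr, lpNl, lpNr, rpDl, rpDr, rpNl, rpNr, sD, sN, ss, slp, srp, lp0l, lp0r, rp0l, rp0r, s0, n1, n2, n3, n4, n5) in h; addh h; clear h.
    zmod.
Qed.
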